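(* Let $G$ be a compact Hausdorff topological group. If $X$ is a completely normal Hausdorff $G$-space, then $X$ is $G$-completely normal.
   Context: A space is completely normal if any two subsets $A,B$ with $\overline A\cap B=\emptyset=A\cap\overline B$ have disjoint open neighbourhoods. A $G$-space $X$ is $G$-completely normal if any two $G$-invariant subsets $A,B\subseteq X$ with $\overline A\cap B=\emptyset=A\cap\overline B$ have disjoint $G$-invariant open neighbourhoods. *)

(* Defs.v *)
From HB Require Import structures.
From mathcomp Require Import all_boot all_order all_algebra.
From mathcomp Require Import all_classical topology.
Set Implicit Arguments. Unset Strict Implicit. Unset Printing Implicit Defensive.
Local Open Scope classical_set_scope.

Definition topological_group (G : topologicalType)
    (mul : G -> G -> G) (inv : G -> G) (e : G) : Prop :=
  [/\ (forall a b c, mul a (mul b c) = mul (mul a b) c),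
      (forall a, mul e a = a /\ mul a e = a),
      (forall a, mul (inv a) a = e /\ mul a (inv a) = e),
      continuous (fun p : G * G => mul p.1 p.2) &
      continuous inv].

Definition G_space (G X : topologicalType)
    (mul : G -> G -> G) (e : G) (act : G -> X -> X) : Prop :=
  [/\ (forall x, act e x = x),
      (forall g h x, act (mul g h) x = act g (act h x)) &
      continuous (fun p : G * X => act p.1 p.2)].

Definition G_invariant (G X : Type) (act : G -> X -> X) (A : set X) : Prop :=
  forall g x, A x -> A (act g x).

Definition completely_normal (X : topologicalType) : Prop :=
  forall A B : set X,
    closure A `&` B = set0 -> A `&` closure B = set0 ->
    exists U V : set X,
      [/\ open U, open V, A `<=` U, B `<=` V & U `&` V = set0].

Definition G_completely_normal (G X : topologicalType) (act : G -> X -> X) : Prop :=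
  forall A B : set X,
    G_invariant act A -> G_invariant act B ->
    closure A `&` B = set0 -> A `&` closure B = set0 ->
    exists U V : set X,
      [/\ open U /\ open V, G_invariant act U /\ G_invariant act V,
          A `<=` U, B `<=` V & U `&` V = set0].

(* Main.v *)
Require Import Defs.
From mathcomp Require Import all_boot all_order all_algebra.
From mathcomp Require Import all_classical topology.
Local Open Scope classical_set_scope.

Lemma tube (G X : topologicalType) (act : G -> X -> X) (U : set X) :
  compact [set: G] -> continuous (fun p : G * X => act p.1 p.2) -> open U ->
  open [set x | forall g, U (act g x)].
Proof.
move=> cG cact oU.
rewrite openE => x0 Hx0.
have := (iffLR (compact_near_coveringP _)) cG X (nbhs x0) (fun y g => U (act g y)) _.
move=> /(_ _) H.
have : \forall F \near nbhs x0, [set: G] `<=` (fun g : G => U (act g F)).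
  apply: H => g _.
  have := cact (g, x0) U.
  apply.
  by apply: open_nbhs_nbhs; split => //; apply: Hx0.
rewrite /interior /=.
by apply: filterS => y Hy g; apply: Hy.
Qed.

Theorem lemma3p12 (G X : topologicalType)
    (mul : G -> G -> G) (inv : G -> G) (e : G) (act : G -> X -> X) :
  topological_group mul inv e ->
  compact [set: G] -> hausdorff_space G ->
  G_space mul e act ->
  completely_normal X -> hausdorff_space X ->
  G_completely_normal act.
Proof.
move=> _ cG _ [ae amul cact] cn _ A B iA iB h1 h2.
have [U [V [oU oV AU BV UV]]] := cn A B h1 h2.
exists [set x | forall g, U (act g x)], [set x | forall g, V (act g x)].
split.
- by split; apply: tube.
- by split => g x /= Hx h; rewrite -amul; apply: Hx.
- by move=> x Ax g; apply: AU; apply: iA.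
- by move=> x Bx g; apply: BV; apply: iB.
- apply/seteqP; split => [x [/= Hu Hv]|x //].
  have Ux := Hu e; have Vx := Hv e; rewrite ae in Ux Vx.
  have : (U `&` V) x by split.
  by rewrite UV.
Qed.
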